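(* Let $R$ be an $F$-finite ring of prime characteristic $p>0$ and let $R\to S$ be a finite extension. Then the trace ideal $\tau_{S/R}=\operatorname{Im}\big(\operatorname{Hom}_R(S,R)\xrightarrow{\ \psi\mapsto\psi(1)\ }R\big)$ is a compatible ideal of $R$; that is, for every $e\in\mathbb{N}$ and every $\phi\in\operatorname{Hom}_R(F^e_*R,R)$ we have $\phi(F^e_*\tau_{S/R})\subseteq\tau_{S/R}$.
   Context: $F^e_*R$ denotes $R$ viewed as an $R$-module via the $e$-th iterate of Frobenius. $R$ is $F$-finite if $F^e_*R$ is a finitely generated $R$-module. An ideal $I\subseteq R$ is compatible if for all $e\in\mathbb{N}$ and all $\varphi\in\operatorname{Hom}_R(F^e_*R,R)$ one has $\varphi(F^e_*I)\subseteq I$. For an $R$-algebra $S$, the trace ideal $\tau_{S/R}$ is the image of the evaluation-at-$1$ map $\operatorname{Hom}_R(S,R)\to R$. *)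

(* Defs.v *)
From HB Require Import structures.
From mathcomp Require Import all_boot all_order all_algebra.
Set Implicit Arguments. Unset Strict Implicit. Unset Printing Implicit Defensive.
Import GRing.Theory.
Local Open Scope ring_scope.

(* A map phi : F^e_* R -> R that is R-linear, where r acts on F^e_* R
   by x |-> r^(p^e) * x.  These are exactly the elements of
   Hom_R(F^e_* R, R). *)
Definition frob_linear (R : comNzRingType) (p e : nat) (phi : R -> R) : Prop :=
  (forall x y : R, phi (x + y) = phi x + phi y) /\
  (forall r x : R, phi (r ^+ (p ^ e) * x) = r * phi x).

(* F^e_* R is a finitely generated R-module: there are finitely many
   g_1..g_n in R such that every x is sum_i r_i^(p^e) * g_i. *)
Definition frob_fg (R : comNzRingType) (p e : nat) : Prop :=
  exists g : seq R, forall x : R,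
    exists r : seq R, size r = size g /\
      x = \sum_(i < size g) (nth 0 r i) ^+ (p ^ e) * (nth 0 g i).

Definition F_finite (R : comNzRingType) (p : nat) : Prop :=
  forall e : nat, @frob_fg R p e.

Definition module_finite (R S : comNzRingType) (f : {rmorphism R -> S}) : Prop :=
  exists s : seq S, forall y : S,
    exists r : seq R, size r = size s /\
      y = \sum_(i < size s) f (nth 0 r i) * (nth 0 s i).

Definition R_linear_to (R S : comNzRingType) (f : {rmorphism R -> S}) (psi : S -> R)
  : Prop :=
  (forall x y : S, psi (x + y) = psi x + psi y) /\
  (forall (r : R) (y : S), psi (f r * y) = r * psi y).

Definition trace_ideal (R S : comNzRingType) (f : {rmorphism R -> S}) : R -> Prop :=
  fun x => exists psi : S -> R, R_linear_to f psi /\ psi 1 = x.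

Definition compatible (R : comNzRingType) (p : nat) (I : R -> Prop) : Prop :=
  forall (e : nat) (phi : R -> R), @frob_linear R p e phi ->
    forall x : R, I x -> I (phi x).

(* Main.v *)
Require Import Defs.
From HB Require Import structures.
From mathcomp Require Import all_boot all_order all_algebra.
Import GRing.Theory.
Local Open Scope ring_scope.

Theorem mainTheorem2 (R S : comNzRingType) (p : nat) (f : {rmorphism R -> S}) :
  (p \in [pchar R])%R ->
  @F_finite R p ->
  injective f ->
  module_finite f ->
  @compatible R p (trace_ideal f).
Proof.
move=> pR _ _ _ e phi [phiD phiL] x [psi [[psiD psiL] <-]].
have pS := rmorph_pchar f pR.
have nat_q : [pchar S].-nat (p ^ e)%N.
  by rewrite pnatX (pnatE _ (pcharf_prime pS)) ?pS ?orbT.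
exists (fun s => phi (psi (s ^+ (p ^ e)))); split; last by rewrite expr1n.
split.
  by move=> s t; rewrite exprDn_pchar // psiD phiD.
by move=> r s; rewrite exprMn -rmorphXn psiL phiL.
Qed.
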